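(* Let $n\ge 1$ and let $Q$ be a quiver (with arbitrary orientation of its arrows) whose underlying graph is a Dynkin graph of type $A_r$, $D_r$, $E_6$, $E_7$ or $E_8$, so that $Q$ has $r$ vertices and $r-1$ arrows. Let $\beta=(n,\dots,n)$. Then the ring of $\mathbb{U}_\beta$-invariant polynomial functions on $F^{\bullet}Rep(Q,\beta)\cong\mathfrak{b}_n^{\oplus (r-1)}$ is $$\mathbb{C}[F^{\bullet}Rep(Q,\beta)]^{\mathbb{U}_\beta}=\mathbb{C}[\mathfrak{t}_n^{\oplus (r-1)}],$$ i.e. it is the subalgebra generated by the diagonal entries $(A_a)_{kk}$, $1\le k\le n$, $a\in Q_1$ (a polynomial ring in $n(r-1)$ variables).
   Context: For a quiver $Q=(Q_0,Q_1)$ with head and tail maps $h,t:Q_1\to Q_0$ and dimension vector $\beta=(n,\dots,n)$, put the vector space $\mathbb{C}^n$ at each vertex with the complete standard flag $0\subset\mathbb{C}^1\subset\cdots\subset\mathbb{C}^n$ ($\mathbb{C}^k$ spanned by the first $k$ standard basis vectors). The filtered quiver variety $F^{\bullet}Rep(Q,\beta)$ is the space of tuples $(A_a)_{a\in Q_1}$ of $n\times n$ matrices with $A_a(\mathbb{C}^k)\subseteq\mathbb{C}^k$ for all $k$, i.e. $F^{\bullet}Rep(Q,\beta)=\mathfrak{b}_n^{\oplus Q_1}$ where $\mathfrak{b}_n$ is the space of upper triangular $n\times n$ complex matrices. Let $U\subset GL_n(\mathbb{C})$ be the group of upper triangular unipotent matrices and $\mathbb{U}_\beta=U^{Q_0}$,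 acting by $(u_i)_{i\in Q_0}\cdot(A_a)_{a}=(u_{h(a)}A_au_{t(a)}^{-1})_a$; it acts on polynomial functions by $(u\cdot f)(A)=f(u^{-1}\cdot A)$. $\mathfrak{t}_n$ denotes the diagonal $n\times n$ matrices, and $\mathbb{C}[\mathfrak{t}_n^{\oplus Q_1}]$ denotes the subalgebra of $\mathbb{C}[\mathfrak{b}_n^{\oplus Q_1}]$ generated by the diagonal entries of the $A_a$. *)

(* Defs.v *)
From mathcomp Require Import all_boot all_algebra all_fingroup.
From mathcomp Require Import mpoly.
From mathcomp.real_closed Require Import complex.
From mathcomp Require Import Rstruct.

Set Implicit Arguments.
Unset Strict Implicit.
Unset Printing Implicit Defensive.
Import GRing.Theory.
Local Open Scope ring_scope.

Definition CC : closedFieldType := (Rdefinitions.R)[i].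

Definition path_edge (r m : nat) (i j : 'I_r) : bool :=
  ((j == i.+1 :> nat) || (i == j.+1 :> nat)) && (maxn i j < m)%N.

Definition single_edge (r p q : nat) (i j : 'I_r) : bool :=
  ((i == p :> nat) && (j == q :> nat)) || ((i == q :> nat) && (j == p :> nat)).

Inductive dynkin_type := TypeA | TypeD | TypeE.

(* A_r : path 0 - 1 - ... - (r-1),                         r >= 1
   D_r : path 0 - ... - (r-2), plus edge (r-3) - (r-1),    r >= 4
   E_r : path 0 - ... - (r-2), plus edge 2 - (r-1),        r = 6,7,8 *)
Definition dynkin_adj (X : dynkin_type) (r : nat) (i j : 'I_r) : bool :=
  match X with
  | TypeA => @path_edge r r i j
  | TypeD => @path_edge r r.-1 i j || @single_edge r (r - 3) r.-1 i j
  | TypeE => @path_edge r r.-1 i j || @single_edge r 2 r.-1 i j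
  end.

Definition dynkin_rank_ok (X : dynkin_type) (r : nat) : bool :=
  match X with
  | TypeA => (1 <= r)%N
  | TypeD => (4 <= r)%N
  | TypeE => (r \in [:: 6; 7; 8])%N
  end.

(* A quiver with vertex set 'I_r, arrow set Q1, tail/head maps t, h.
   Its underlying (multi)graph is the Dynkin graph of type X_r: there is a
   relabelling sigma of the vertices such that every arrow becomes an edge of
   the Dynkin graph, distinct arrows give distinct edges, and every edge of the
   Dynkin graph comes from an arrow. *)
Definition underlying_dynkin (r : nat) (Q1 : finType) (t h : Q1 -> 'I_r)
    (X : dynkin_type) : Prop :=
  dynkin_rank_ok X r /\
  exists sigma : {perm 'I_r},
    [/\ forall a, dynkin_adj X (sigma (t a)) (sigma (h a)),
        forall a b, ((t a == t b) && (h a == h b)) || ((t a == h b) && (h a == t b))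
                    -> a = b
      & forall i j, dynkin_adj X i j ->
          exists a, ((sigma (t a) == i) && (sigma (h a) == j))
                 || ((sigma (t a) == j) && (sigma (h a) == i))].

Definition upper_tri (n : nat) (M : 'M[CC]_n) : Prop :=
  forall i j : 'I_n, (j < i)%N -> M i j = 0.

Definition unipotent_upper (n : nat) (M : 'M[CC]_n) : Prop :=
  upper_tri M /\ forall i : 'I_n, M i i = 1.

(* Coordinates of b_n^{Q1}: triples (a, i, j) with i <= j. *)
Definition bcoord (Q1 : finType) (n : nat) : finType :=
  {x : Q1 * 'I_n * 'I_n | (x.1.2 <= x.2)%N}.

Definition nb (Q1 : finType) (n : nat) : nat := #|{: bcoord Q1 n}|.

Definition polyB (Q1 : finType) (n : nat) := {mpoly CC[nb Q1 n]}.

Definition coords (Q1 : finType) (n : nat) (A : Q1 -> 'M[CC]_n)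
    (k : 'I_(nb Q1 n)) : CC :=
  let x := val (enum_val k) in A x.1.1 x.1.2 x.2.

Definition eval_at (Q1 : finType) (n : nat) (f : polyB Q1 n)
    (A : Q1 -> 'M[CC]_n) : CC := f.@[coords A].

Definition uact (r : nat) (Q1 : finType) (t h : Q1 -> 'I_r) (n : nat)
    (u : 'I_r -> 'M[CC]_n) (A : Q1 -> 'M[CC]_n) : Q1 -> 'M[CC]_n :=
  fun a => u (h a) *m A a *m invmx (u (t a)).

(* U_beta-invariance of f: (u . f)(A) = f(u^{-1} . A) = f(A) for all u, A. *)
Definition U_invariant (r : nat) (Q1 : finType) (t h : Q1 -> 'I_r) (n : nat)
    (f : polyB Q1 n) : Prop :=
  forall (u : 'I_r -> 'M[CC]_n), (forall i, unipotent_upper (u i)) ->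
  forall (A : Q1 -> 'M[CC]_n), (forall a, upper_tri (A a)) ->
    eval_at f (uact t h (fun i => invmx (u i)) A) = eval_at f A.

Definition diag_coord (Q1 : finType) (n : nat) (x : Q1 * 'I_n) : bcoord Q1 n :=
  @exist _ (fun y : Q1 * 'I_n * 'I_n => (y.1.2 <= y.2)%N) (x.1, x.2, x.2) (leqnn x.2).

Definition nd (Q1 : finType) (n : nat) : nat := #|{: Q1 * 'I_n}|.

Definition diag_vars (Q1 : finType) (n : nat) : (nd Q1 n).-tuple (polyB Q1 n) :=
  [tuple 'X_(enum_rank (diag_coord (enum_val k))) | k < nd Q1 n].

(* C[t_n^{Q1}] : the subalgebra of polyB generated by the diagonal entries,
   i.e. the image of polynomials in the diagonal variables. *)
Definition in_diag_subalg (Q1 : finType) (n : nat) (f : polyB Q1 n) : Prop :=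
  exists g : {mpoly CC[nd Q1 n]}, f = comp_mpoly (diag_vars Q1 n) g.

(* Main.v *)
Require Import Defs.
From mathcomp Require Import all_boot all_algebra all_fingroup.
From mathcomp Require Import mpoly.
From mathcomp.real_closed Require Import complex.
From mathcomp Require Import Rstruct.
From mathcomp Require Import zify.
Set Implicit Arguments.
Unset Strict Implicit.
Unset Printing Implicit Defensive.
Import GRing.Theory Num.Theory.
Local Open Scope ring_scope.

Section Tri.
Variable n : nat.
Implicit Types M N : 'M[CC]_n.

Lemma upper_mul M N : upper_tri M -> upper_tri N -> upper_tri (M *m N).
Proof.
move=> hM hN i j ji; rewrite mxE big1 // => k _.
case: (ltnP k i) => ki; first by rewrite hM // mul0r.
by rewrite hN ?mulr0 // (leq_trans ji ki).
Qed.

Lemma diag_mul M N : upper_tri M -> upper_tri N ->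
  forall i, (M *m N) i i = M i i * N i i.
Proof.
move=> hM hN i; rewrite mxE (bigD1 i) //= big1 ?addr0 // => k ki.
case: (ltnP k i) => lt; first by rewrite hM // mul0r.
rewrite hN ?mulr0 //; rewrite ltn_neqAle lt andbT.
by apply: contra ki => /eqP e; apply/eqP/val_inj.
Qed.

Lemma upper_unit M : upper_tri M -> (forall i, M i i != 0) -> M \in unitmx.
Proof.
move=> hM hd; rewrite unitmxE -det_tr det_trig.
  by rewrite unitfE; apply/prodf_neq0 => i _; rewrite mxE.
by apply/is_trig_mxP => i j ij; rewrite mxE hM.
Qed.

Lemma upper_inv M : upper_tri M -> (forall i, M i i != 0) ->
  upper_tri (invmx M) /\ forall i, invmx M i i = (M i i)^-1.
Proof.
move=> hM hd; have uM := upper_unit hM hd.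
have hBM := mulVmx uM; set B := invmx M in hBM *.
have hB : upper_tri B.
  suff H : forall j0 (j i : 'I_n), val j = j0 -> (j < i)%N -> B i j = 0.
    by move=> i j; apply: H.
  elim/ltn_ind => j0 IH j i ej ji.
  have := congr1 (fun X : 'M[CC]_n => X i j) hBM; rewrite !mxE.
  have -> : (i == j) = false by apply/negbTE; apply: contraTneq ji => ->; rewrite ltnn.
  rewrite (bigD1 j) //= big1 ?addr0; last first.
    move=> k kj; case: (ltnP j k) => jk; first by rewrite hM ?mulr0.
    have kj' : (k < j)%N by rewrite ltn_neqAle jk andbT; apply: contra kj => /eqP e; apply/eqP/val_inj.
    by rewrite (IH k) ?mul0r ?(ltn_trans kj' ji) // -ej.
  by move/eqP; rewrite mulf_eq0 (negbTE (hd j)) orbF => /eqP.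
split=> // i; have := congr1 (fun X : 'M[CC]_n => X i i) hBM; rewrite diag_mul // mxE eqxx /=.
by move=> e; apply: (mulIf (hd i)); rewrite e mulVf.
Qed.

Definition dg M : 'M[CC]_n := \matrix_(i, j) (if i == j then M i j else 0).

Lemma dg_upper M : upper_tri (dg M).
Proof. by move=> i j ji; rewrite mxE; case: eqP => // e; move: ji; rewrite e ltnn. Qed.

Lemma dg_diag M i : dg M i i = M i i.
Proof. by rewrite mxE eqxx. Qed.

Lemma unip_unit M : unipotent_upper M -> M \in unitmx.
Proof. by case=> hu hd; apply: upper_unit => // i; rewrite hd oner_eq0. Qed.

Lemma unip_inv M : unipotent_upper M -> unipotent_upper (invmx M).
Proof.
case=> hu hd; have hd' : forall i, M i i != 0 by move=> i; rewrite hd oner_eq0.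
have [h1 h2] := upper_inv hu hd'.
by split=> // i; rewrite h2 hd invr1.
Qed.

End Tri.

Lemma natCC_inj (i j : nat) : (i%:R : CC) = j%:R -> i = j.
Proof.
move=> h. apply/eqP. have := @eqr_nat (Rdefinitions.R[i] : numClosedFieldType) i j. rewrite /CC in h. rewrite h eqxx. by move=> <-.
Qed.

Lemma poly_all_roots (q : {poly CC}) : (forall s, q.[s] = 0) -> q = 0.
Proof.
move=> hq; apply: (@roots_geq_poly_eq0 _ q [seq i%:R | i <- iota 0 (size q)]).
- by apply/allP => x _; apply/rootP.
- by rewrite map_inj_uniq ?iota_uniq // => i j; apply: natCC_inj.
- by rewrite size_map size_iota.
Qed.



Definition extv N (w : 'I_N -> CC) (s : CC) (i : 'I_N.+1) : CC :=
  if @insub _ (fun k => k < N)%N _ (val i) is Some j then w j else s.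

Lemma extv_widen N w s (i : 'I_N) : extv w s (widen_ord (leqnSn N) i) = w i.
Proof. by rewrite /extv /= insubT // => H; congr w; apply: val_inj. Qed.

Lemma extv_max N w s : extv w s (@ord_max N) = s.
Proof. by rewrite /extv insubF //= ltnn. Qed.

Lemma meval_muni N (p : {mpoly CC[N.+1]}) w s :
  (map_poly (meval w) (muni p)).[s] = p.@[extv w s].
Proof.
rewrite muniE mevalE rmorph_sum /= horner_sum; apply: eq_bigr => m _.
rewrite -!mul_polyC rmorphM /= map_polyC hornerM hornerC.
rewrite map_polyXn hornerXn.
rewrite -[X in X * _]/(meval w _) mevalZ mevalX big_ord_recr /= extv_max mulrA.
congr (_ * _ * _); apply: eq_bigr => i _; by rewrite mnmE extv_widen.
Qed.

Lemma mnm_split N (m1 m2 : 'X_{1..N.+1}) :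
  ([multinom m1 (widen_ord (leqnSn N) i) | i < N] ==
   [multinom m2 (widen_ord (leqnSn N) i) | i < N]) && (m1 ord_max == m2 ord_max)
  = (m1 == m2).
Proof.
apply/idP/eqP => [/andP[/eqP e1 /eqP e2]|->]; last by rewrite !eqxx.
apply/mnmP => i; case: (unliftP ord_max i) => [j ->|->] //.
have := congr1 (fun mm : 'X_{1..N} => mm j) e1; rewrite !mnmE.
have -> // : lift ord_max j = widen_ord (leqnSn N) j.
by apply/val_inj; rewrite /= /bump leqNgt ltn_ord.
Qed.

Lemma muni_coef N (p : {mpoly CC[N.+1]}) (m : 'X_{1..N.+1}) :
  ((muni p)`_(m ord_max))@_[multinom m (widen_ord (leqnSn N) i) | i < N] = p@_m.
Proof.
rewrite muniE coef_sum (big_morph (mcoeff _) (mcoeffD _) (mcoeff0 _ _)).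
rewrite [p in RHS]mpolyE (big_morph (mcoeff _) (mcoeffD _) (mcoeff0 _ _)).
apply: eq_bigr => m' _.
rewrite coefZ coefXn mulr_natr mcoeffMn mcoeffZ mcoeffX mcoeffZ mcoeffX.
rewrite -mnm_split [m ord_max == _]eq_sym.
by case: (_ == _); case: (_ == _); rewrite /= ?mulr0n ?mulr1n ?mulr0.
Qed.

Lemma muni_inj0 N (p : {mpoly CC[N.+1]}) : muni p = 0 -> p = 0.
Proof. by move=> h; apply/mpolyP => m; rewrite -muni_coef h coef0 !mcoeff0. Qed.

Lemma IT N (p : {mpoly CC[N]}) : (forall v, p.@[v] = 0) -> p = 0.
Proof.
elim: N p => [|N IH] p hp.
  have m0 : forall m' : 'X_{1..0}, m' = 0%MM by move=> m'; apply/mnmP => -[].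
  apply/mpolyP => m; rewrite mcoeff0 (m0 m).
  have e : p@_0%MM = \sum_(m' <- msupp p) p@_m'.
    rewrite [p in LHS]mpolyE (big_morph (mcoeff _) (mcoeffD _) (mcoeff0 _ _)).
    by apply: eq_bigr => m' _; rewrite mcoeffZ mcoeffX (m0 m') eqxx mulr1.
  rewrite e -[RHS](hp (fun _ => 0)) mevalE; apply: eq_bigr => m' _.
  by rewrite big_ord0 mulr1.
apply: muni_inj0; apply/polyP => k; rewrite coef0; apply: IH => w.
have h1 : map_poly (meval w) (muni p) = 0.
  by apply: poly_all_roots => s; rewrite meval_muni hp.
by have := congr1 (fun q : {poly CC} => q`_k) h1; rewrite coef_map coef0.
Qed.



Lemma dyn_key X r (i j i' j' : 'I_r) : dynkin_rank_ok X r ->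
  dynkin_adj X i j -> dynkin_adj X i' j' ->
  (i != j :> nat) /\ (maxn i j = maxn i' j' -> minn i j = minn i' j').
Proof.
case: X; rewrite /dynkin_rank_ok /dynkin_adj /path_edge /single_edge ?inE;
move: (nat_of_ord i) (nat_of_ord j) (nat_of_ord i') (nat_of_ord j') => a b c d;
split; lia.
Qed.

Section Diag.
Variables (n r : nat) (Q1 : finType) (t h : Q1 -> 'I_r) (X : dynkin_type).
Hypothesis hX : dynkin_rank_ok X r.
Variable sigma : {perm 'I_r}.
Hypothesis hadj : forall a, dynkin_adj X (sigma (t a)) (sigma (h a)).
Hypothesis hinj : forall a b,
  ((t a == t b) && (h a == h b)) || ((t a == h b) && (h a == t b)) -> a = b.

Definition lab x : nat := sigma x.
Definition Mx a := maxn (lab (t a)) (lab (h a)).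

Lemma lab_inj x y : lab x = lab y -> x = y.
Proof. by move=> e; apply: (@perm_inj _ sigma); apply: val_inj. Qed.

Lemma th_neq a : lab (t a) != lab (h a).
Proof. by have [] := dyn_key hX (hadj a) (hadj a). Qed.

Lemma Mx_inj a b : Mx a = Mx b -> a = b.
Proof.
move=> e; have [_ k] := dyn_key hX (hadj a) (hadj b).
have := k e; rewrite /Mx /lab in e * => e'.
have : (nat_of_ord (sigma (t a)) = sigma (t b) /\ nat_of_ord (sigma (h a)) = sigma (h b))
   \/ (nat_of_ord (sigma (t a)) = sigma (h b) /\ nat_of_ord (sigma (h a)) = sigma (t b)) by lia.
case=> [[e1 e2]|[e1 e2]]; apply: hinj;
  by rewrite (lab_inj e1) (lab_inj e2) !eqxx ?orbT.
Qed.

Variable A : Q1 -> 'M[CC]_n.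
Hypothesis hA : forall a, upper_tri (A a).
Hypothesis hAd : forall a i, A a i i != 0.

Definition act (u : 'I_r -> 'M[CC]_n) a := uact t h (fun i => invmx (u i)) A a.

Lemma unip1 : unipotent_upper (1%:M : 'M[CC]_n).
Proof.
split=> [i j ji|i]; rewrite mxE ?eqxx //.
by have -> : (i == j) = false by apply/negbTE; apply: contraTneq ji => ->; rewrite ltnn.
Qed.

Lemma diagonalize_k k : exists u, (forall i, unipotent_upper (u i)) /\
  forall a, (Mx a < k)%N -> act u a = dg (A a).
Proof.
elim: k => [|k [u [hu hk]]].
  by exists (fun _ => 1%:M); split => // i; apply: unip1.
case: (pickP (fun a => Mx a == k)) => [a /eqP ea | hn]; last first.
  exists u; split => // b; rewrite ltnS leq_eqVlt => /orP[/eqP e|]; last exact: hk.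
  by move: (hn b); rewrite e eqxx.
pose D := dg (A a).
have hDu : upper_tri D by apply: dg_upper.
have hDd : forall i, D i i != 0 by move=> i; rewrite dg_diag.
have [hDi hDi'] := upper_inv hDu hDd.
have uD := upper_unit hDu hDd.
have uA := upper_unit (hA a) (hAd a).
have [hAi hAi'] := upper_inv (hA a) (hAd a).
have other : forall b, b != a -> (Mx b < k.+1)%N -> (lab (t b) < k)%N /\ (lab (h b) < k)%N.
  move=> b nba; rewrite ltnS leq_eqVlt => /orP[/eqP e|].
    by move: nba; rewrite (Mx_inj (etrans e (esym ea))) eqxx.
  by rewrite /Mx gtn_max => /andP[].
case: (ltngtP (lab (t a)) (lab (h a))) => [lt|gt|eq]; last first.
- by move: (th_neq a); rewrite eq eqxx.
- (* t a is new *)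
  have ek : lab (t a) = k by rewrite -ea /Mx; lia.
  pose Xv := invmx (A a) *m u (h a) *m D.
  have hXv : unipotent_upper Xv.
    have [hu1 hu2] := hu (h a).
    split; first by apply: upper_mul; [apply: upper_mul|].
    by move=> i; rewrite !diag_mul ?hAi' ?hu2 ?mulr1 ?dg_diag ?mulVf //; apply: upper_mul.
  exists (fun i => if i == t a then Xv else u i); split.
    by move=> i; case: eqP.
  move=> b hb; case: (eqVneq b a) => [->|nba].
    rewrite /act /uact.
    have -> : (h a == t a) = false.
      by apply/negbTE; apply: contraTneq gt => ->; rewrite ltnn.
    rewrite eqxx invmxK /Xv !mulmxA -(mulmxA (invmx (u (h a)))) mulmxV //.
    by rewrite mulmx1 mulVmx ?mul1mx //; apply: unip_unit.
  have [lt1 lt2] := other b nba hb.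
  rewrite /act /uact.
  have -> : (h b == t a) = false by apply/negbTE; apply: contraTneq lt2 => ->; rewrite ek ltnn.
  have -> : (t b == t a) = false by apply/negbTE; apply: contraTneq lt1 => ->; rewrite ek ltnn.
  apply: hk; rewrite /Mx gtn_max lt1 lt2 //.
- (* h a is new *)
  have ek : lab (h a) = k by rewrite -ea /Mx; lia.
  pose Xv := A a *m u (t a) *m invmx D.
  have hXv : unipotent_upper Xv.
    have [hu1 hu2] := hu (t a).
    split; first by apply: upper_mul; [apply: upper_mul|].
    by move=> i; rewrite !diag_mul ?hDi' ?hu2 ?mulr1 ?dg_diag ?mulfV //; apply: upper_mul.
  exists (fun i => if i == h a then Xv else u i); split.
    by move=> i; case: eqP.
  move=> b hb; case: (eqVneq b a) => [->|nba].
    rewrite /act /uact.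
    have -> : (t a == h a) = false.
      by apply/negbTE; apply: contraTneq lt => ->; rewrite ltnn.
    rewrite eqxx invmxK -mulmxA.
    have -> : A a *m u (t a) = Xv *m D by rewrite /Xv -mulmxA mulVmx // mulmx1.
    by rewrite mulmxA mulVmx ?mul1mx //; apply: unip_unit.
  have [lt1 lt2] := other b nba hb.
  rewrite /act /uact.
  have -> : (h b == h a) = false by apply/negbTE; apply: contraTneq lt2 => ->; rewrite ek ltnn.
  have -> : (t b == h a) = false by apply/negbTE; apply: contraTneq lt1 => ->; rewrite ek ltnn.
  apply: hk; rewrite /Mx gtn_max lt1 lt2 //.
Qed.

Lemma diagonalize : exists u, (forall i, unipotent_upper (u i)) /\
  forall a, act u a = dg (A a).
Proof.
have [u [hu hk]] := diagonalize_k r; exists u; split => // a; apply: hk.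
by rewrite /Mx gtn_max !ltn_ord.
Qed.

End Diag.



Section Dens.
Variables (n : nat) (Q1 : finType).

Definition isd (k : 'I_(nb Q1 n)) : bool :=
  let x := val (enum_val k) in x.1.2 == x.2.

Lemma coords_shift (A : Q1 -> 'M[CC]_n) s k :
  coords (fun a => A a + s%:M) k = coords A k + s *+ isd k.
Proof. by rewrite /coords !mxE. Qed.

Lemma coords_dg (A : Q1 -> 'M[CC]_n) k :
  coords (fun a => dg (A a)) k = if isd k then coords A k else 0.
Proof. by rewrite /coords /isd !mxE; case: eqP => // ->. Qed.

Definition PB (f : polyB Q1 n) (w : 'I_(nb Q1 n) -> CC) : {poly CC} :=
  mmap polyC (fun k => (w k)%:P + 'X *+ isd k) f.

Lemma PB_horner f w s : (PB f w).[s] = f.@[fun k => w k + s *+ isd k].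
Proof.
rewrite /PB (mmapE _ (leqnn (msize f))) /meval (mmapE _ (leqnn (msize f))).
rewrite horner_sum; apply: eq_bigr => m _.
rewrite hornerM hornerC /mmap1 horner_prod; congr (_ * _); apply: eq_bigr => i _.
by rewrite horner_exp hornerD hornerC hornerMn hornerX.
Qed.
End Dens.

Section Main.
Variables (n r : nat) (Q1 : finType) (t h : Q1 -> 'I_r) (X : dynkin_type).
Hypothesis hX : dynkin_rank_ok X r.
Variable sigma : {perm 'I_r}.
Hypothesis hadj : forall a, dynkin_adj X (sigma (t a)) (sigma (h a)).
Hypothesis hinj : forall a b,
  ((t a == t b) && (h a == h b)) || ((t a == h b) && (h a == t b)) -> a = b.
Variable f : polyB Q1 n.
Hypothesis hinv : U_invariant t h f.

Lemma inv_diag (A : Q1 -> 'M[CC]_n) : (forall a, upper_tri (A a)) ->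
  eval_at f A = eval_at f (fun a => dg (A a)).
Proof.
move=> hA; set w1 := coords A; set w2 := coords (fun a => dg (A a)).
have key : forall s, (forall a i, A a i i + s != 0) ->
    f.@[fun k => w1 k + s *+ isd k] = f.@[fun k => w2 k + s *+ isd k].
  move=> s hs; pose As := fun a => A a + s%:M.
  have hAs : forall a, upper_tri (As a).
    move=> a i j ji; rewrite !mxE hA //.
    have -> : (i == j) = false by apply/negbTE; apply: contraTneq ji => ->; rewrite ltnn.
    by rewrite mulr0n addr0.
  have hAsd : forall a i, As a i i != 0 by move=> a i; rewrite !mxE eqxx mulr1n.
  have [u [hu hd]] := diagonalize hX hadj hinj hAs hAsd.
  have e := hinv hu hAs; rewrite /eval_at in e.
  rewrite (meval_eq _ (fun k => esym (coords_shift A s k))) -e.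
  apply: meval_eq => k; rewrite /coords.
  have H : uact t h (fun i => invmx (u i)) As (val (enum_val k)).1.1 = dg (As (val (enum_val k)).1.1) := hd _.
  rewrite H.
  have := coords_dg As k; rewrite /coords => ->.
  rewrite /w2 coords_dg /isd /coords; case: eqP => e0; rewrite ?mxE ?e0 ?eqxx ?mulr1n //.
  by rewrite /= mulr0n addr0.
pose P := (PB f w1 - PB f w2) * \prod_(x : Q1 * 'I_n) ('X + (A x.1 x.2 x.2)%:P).
have P0 : P = 0.
  apply: poly_all_roots => s; rewrite /P hornerM horner_prod hornerD hornerN !PB_horner.
  case: (boolP [forall x : Q1 * 'I_n, A x.1 x.2 x.2 + s != 0]) => [/forallP H|].
    rewrite key ?subrr ?mul0r // => a i; exact: (H (a, i)).
  rewrite negb_forall => /existsP[x /negPn/eqP hx].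
  by rewrite (bigD1 x) //= hornerD hornerX hornerC [s + _]addrC hx mul0r mulr0.
move: P0 => /eqP; rewrite /P mulf_eq0 => /orP[/eqP|]; last first.
  have hm : \prod_(x : Q1 * 'I_n) ('X + (A x.1 x.2 x.2)%:P) \is monic.
    by apply: monic_prod => x _; apply: monicXaddC.
  by rewrite (negbTE (monic_neq0 hm)).
move/eqP; rewrite subr_eq0 => /eqP e.
have := congr1 (fun q : {poly CC} => q.[0]) e; rewrite /= !PB_horner /eval_at.
by rewrite -/w1 -/w2 (meval_eq _ (fun k => etrans (congr1 _ (mul0rn _ _)) (addr0 _))) (meval_eq _ (fun k => etrans (congr1 _ (mul0rn _ _)) (addr0 _))).
Qed.

End Main.



Section Fin.
Variables (n : nat) (Q1 : finType).

Definition Av (v : 'I_(nb Q1 n) -> CC) (a : Q1) : 'M[CC]_n :=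
  \matrix_(i, j) (if (insub (a, i, j) : option (bcoord Q1 n)) is Some y
                  then v (enum_rank y) else 0).

Lemma coords_Av v k : coords (Av v) k = v k.
Proof.
rewrite /coords mxE -!surjective_pairing.
by rewrite (valK (enum_val k)) enum_valK.
Qed.

Lemma Av_upper v a : upper_tri (Av v a).
Proof. by move=> i j ji; rewrite mxE insubF //= leqNgt ji. Qed.

Definition Tt : (nb Q1 n).-tuple {mpoly CC[nd Q1 n]} :=
  [tuple (if isd k then 'X_(enum_rank ((val (enum_val k)).1.1, (val (enum_val k)).1.2))
          else 0) | k < nb Q1 n].

Lemma diag_eval (g : polyB Q1 n) v :
  (comp_mpoly (diag_vars Q1 n) (comp_mpoly Tt g)).@[v] =
  g.@[fun k => if isd k then v k else 0].
Proof.
rewrite !comp_mpoly_meval; apply: meval_eq => k.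
rewrite tnth_mktuple; case: ifP => hk; last by rewrite meval0.
rewrite mevalXU tnth_mktuple enum_rankK mevalXU.
congr v; rewrite -[RHS]enum_valK; congr enum_rank; apply: val_inj => /=.
move: hk; rewrite /isd /=; case: (sval (enum_val k)) => [[a i] j] /= /eqP -> //.
Qed.

End Fin.

Theorem mainTheorem1 (n r : nat) (Q1 : finType) (t h : Q1 -> 'I_r)
    (X : dynkin_type) :
  (1 <= n)%N ->
  underlying_dynkin t h X ->
  forall f : polyB Q1 n, U_invariant t h f <-> in_diag_subalg f.
Proof.
move=> _ [hX [sigma [hadj hinj _]]] f; split.
- move=> hinv; exists (comp_mpoly (@Tt n Q1) f).
  apply/eqP; rewrite -subr_eq0; apply/eqP; apply: IT => v.
  rewrite mevalB diag_eval.
  have := inv_diag hX hadj hinj hinv (Av_upper v); rewrite /eval_at.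
  rewrite (meval_eq _ (coords_Av v)) => ->.
  apply/eqP; rewrite subr_eq0; apply/eqP; apply: meval_eq => k.
  by rewrite coords_dg coords_Av.
- case=> g ->; move=> u hu A hA; rewrite /eval_at !comp_mpoly_meval.
  apply: meval_eq => i; rewrite tnth_mktuple !mevalXU /coords enum_rankK /=.
  set a := (enum_val i).1; set j := (enum_val i).2.
  have [u1 u2] := unip_inv (hu (h a)); have [v1 v2] := unip_inv (unip_inv (hu (t a))).
  rewrite /uact diag_mul ?diag_mul ?u2 ?v2 ?mul1r ?mulr1 //.
  exact: upper_mul.
Qed.
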